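(* Let $f,g\colon X\to Y$ and $f',g'\colon X'\to Y'$ be continuous maps, and assume that $X\times X'$ is a normal space. Then the maps $f\times f',\,g\times g'\colon X\times X'\to Y\times Y'$ satisfy $\mathrm{D}(f\times f',g\times g')\leq \mathrm{D}(f,g)+\mathrm{D}(f',g')$.
   Context: For continuous maps $f,g\colon X\to Y$, the homotopic distance $\mathrm{D}(f,g)$ is the least integer $n\geq 0$ such that there is an open cover $\{U_0,\dots,U_n\}$ of $X$ with $f|_{U_j}\simeq g|_{U_j}$ for all $j$; if no such cover exists, $\mathrm{D}(f,g)=\infty$. *)

(* Defs.v *)
From HB Require Import structures.
From mathcomp Require Import all_boot all_order all_algebra.
From mathcomp Require Import all_classical all_reals all_analysis.
From mathcomp Require Import Rstruct Rstruct_topology.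
Set Implicit Arguments. Unset Strict Implicit. Unset Printing Implicit Defensive.
Import Order.TTheory GRing.Theory Num.Theory.
Local Open Scope classical_set_scope.

(* f|_U and g|_U are homotopic (as maps U -> Y, U with the subspace topology):
   there is H : U x [0,1] -> Y continuous with H(-,0)=f, H(-,1)=g on U. *)
Definition homotopic_on {X Y : topologicalType} (U : set X) (f g : X -> Y) :=
  exists H : X * Rdefinitions.R -> Y,
    {within U `*` `[0%R, 1%R], continuous H} /\
    (forall x, U x -> H (x, 0%R) = f x) /\
    (forall x, U x -> H (x, 1%R) = g x).

Definition hdist_cover {X Y : topologicalType} (f g : X -> Y) (n : nat) :=
  exists U : nat -> set X,
    (forall j, (j <= n)%N -> open (U j)) /\
    (forall x : X, exists2 j, (j <= n)%N & U j x) /\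
    (forall j, (j <= n)%N -> homotopic_on (U j) f g).

(* Homotopic distance D(f,g): Some n for the least such n, None for infinity. *)
Definition hdist {X Y : topologicalType} (f g : X -> Y) : option nat :=
  match pselect (exists n, hdist_cover f g n) with
  | left h => Some (@ex_minn (fun n => `[< hdist_cover f g n >])
                      (let: ex_intro n hn := h in ex_intro _ n (asboolT hn)))
  | right _ => None
  end.

Definition oadd (a b : option nat) : option nat :=
  match a, b with Some m, Some n => Some (m + n)%N | _, _ => None end.
Definition ole (a b : option nat) : Prop :=
  match a, b with
  | _, None => True
  | None, Some _ => False
  | Some m, Some n => (m <= n)%N
  end.

Definition prod_map {X X' Y Y' : Type} (f : X -> Y) (f' : X' -> Y')
  : X * X' -> Y * Y' := fun p => (f p.1, f' p.2).

(* Main.v *)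
Require Import Defs.
From mathcomp Require Import all_boot all_order all_algebra.
From mathcomp Require Import all_classical all_reals all_analysis.
From mathcomp Require Import Rstruct Rstruct_topology zify.
Set Implicit Arguments. Unset Strict Implicit. Unset Printing Implicit Defensive.
Import Order.TTheory GRing.Theory Num.Theory.
Local Open Scope classical_set_scope.

Lemma within_comp {T S : topologicalType} (g : T -> S) (A : set T) (B : set S) x :
  {for x, continuous g} -> (forall y, A y -> B (g y)) ->
  g @ within A (nbhs x) --> within B (nbhs (g x)).
Proof.
move=> cg AB P; rewrite !nbhs_simpl /within /= => HP.
have := cg _ HP; rewrite nbhs_simpl /=.
by apply: filterS => y /= H Ay; apply: H; apply: AB.
Qed.

Lemma glue_local {T S : topologicalType} (D : set T) (h : T -> S) :
  (forall z, D z -> exists (M : set T) (h' : T -> S) (D' : set T),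
     [/\ nbhs z M, (forall w, M w -> D w -> D' w /\ h w = h' w), D' z &
         h' @ within D' (nbhs z) --> h' z]) ->
  {within D, continuous h}.
Proof.
move=> H; apply/subspace_continuousP => z Dz.
have [M [h' [D' [Mz MD D'z ch']]]] := H z Dz.
have hz : h z = h' z by have [] := MD z (nbhs_singleton Mz) Dz.
rewrite /from_subspace hz => P. rewrite !nbhs_simpl /within /= => /ch'.
rewrite nbhs_simpl /within /= => HP.
have := filterI Mz HP; move=> /(_ _) HH; apply: filterS HH => w [Mw HPw] Dw.
have [D'w ->] := MD w Mw Dw; exact: HPw.
Qed.

Lemma cont_g {X X' : topologicalType} (w : (X * X') * Rdefinitions.R) :
  {for w, continuous (fun w : (X * X') * Rdefinitions.R => (w.1.1, w.2))}.
Proof.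
apply: (@cvg_pair _ _ _ (nbhs w) (nbhs w.1.1) (nbhs w.2)).
  exact: (cvg_comp _ _ (@cvg_fst _ _ (nbhs w.1) (nbhs w.2) _) (@cvg_fst _ _ (nbhs w.1.1) (nbhs w.1.2) _)).
exact: (@cvg_snd _ _ (nbhs w.1) (nbhs w.2) _).
Qed.

Lemma cont_g' {X X' : topologicalType} (w : (X * X') * Rdefinitions.R) :
  {for w, continuous (fun w : (X * X') * Rdefinitions.R => (w.1.2, w.2))}.
Proof.
apply: (@cvg_pair _ _ _ (nbhs w) (nbhs w.1.2) (nbhs w.2)).
  exact: (cvg_comp _ _ (@cvg_fst _ _ (nbhs w.1) (nbhs w.2) _) (@cvg_snd _ _ (nbhs w.1.1) (nbhs w.1.2) _)).
exact: (@cvg_snd _ _ (nbhs w.1) (nbhs w.2) _).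
Qed.

Lemma prod_homot {X X' Y Y' : topologicalType} (U : set X) (V : set X')
  (H1 : X * Rdefinitions.R -> Y) (H2 : X' * Rdefinitions.R -> Y') :
  {within U `*` `[0%R, 1%R], continuous H1} ->
  {within V `*` `[0%R, 1%R], continuous H2} ->
  {within (U `*` V) `*` `[0%R, 1%R],
     continuous (fun w : (X * X') * Rdefinitions.R => (H1 (w.1.1, w.2), H2 (w.1.2, w.2)))}.
Proof.
move=> /subspace_continuousP c1 /subspace_continuousP c2.
apply/subspace_continuousP => w [[/= Uw Vw] Iw].
apply: cvg_pair.
  apply: (cvg_comp (fun w : (X * X') * Rdefinitions.R => (w.1.1, w.2)) H1 _ (c1 (w.1.1, w.2) _)).
    apply: within_comp; first exact: cont_g.
    by move=> y [[/= ? ?] ?]; split.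
  by split.
apply: (cvg_comp (fun w : (X * X') * Rdefinitions.R => (w.1.2, w.2)) H2 _ (c2 (w.1.2, w.2) _)).
  apply: within_comp; first exact: cont_g'.
  by move=> y [[/= ? ?] ?]; split.
by split.
Qed.

Lemma openP' {T : topologicalType} (A : set T) :
  (forall z, A z -> nbhs z A) -> open A.
Proof. by move=> H; rewrite openE => z /H. Qed.

Lemma nbhs_gt0 {T : topologicalType} (f : T -> Rdefinitions.R) z :
  continuous f -> (0 < f z)%R -> nbhs z [set w | (0 < f w)%R].
Proof. by move=> cf fz; exact: (cvgr_gt (f z) (cf z) _ fz). Qed.

Lemma openX1 {X X' : topologicalType} (U : set X) :
  open U -> open (U `*` [set: X']).
Proof.
move=> oU; apply: openP' => z [Uz _].
exists (U, setT) => //=; split => //; first exact: open_nbhs_nbhs.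
exact: filterT.
Qed.

Lemma openX2 {X X' : topologicalType} (V : set X') :
  open V -> open ([set: X] `*` V).
Proof.
move=> oV; apply: openP' => z [_ Vz].
exists (setT, V) => //=; split => //; first exact: filterT.
exact: open_nbhs_nbhs.
Qed.

Lemma cover_funs {Z : topologicalType} (hN : normal_space Z) (U : nat -> set Z) n :
  (forall j, (j <= n)%N -> open (U j)) -> (forall z, exists2 j, (j <= n)%N & U j z) ->
  exists phi : nat -> Z -> Rdefinitions.R, [/\ (forall j, continuous (phi j)),
    (forall j z, (0 < phi j z)%R -> U j z) &
    (forall z, exists2 j, (j <= n)%N & (0 < phi j z)%R)].
Proof.
move=> oU cU.
suff : forall k, (k <= n.+1)%N -> exists phi : nat -> Z -> Rdefinitions.R,
   [/\ (forall j, continuous (phi j)), (forall j z, (0 < phi j z)%R -> U j z) &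
    (forall z, (exists2 j, (j < k)%N & (0 < phi j z)%R) \/
               (exists j, [/\ (k <= j)%N, (j <= n)%N & U j z]))].
  move=> /(_ n.+1 (leqnn _)) [phi [c1 c2 c3]]; exists phi; split => // z.
  case: (c3 z) => [[j jn pj]|[j [jn jn' _]]]; first by exists j.
  by move: (leq_trans jn jn'); rewrite ltnn.
elim=> [_|k IH kn].
  exists (fun _ _ => 0%R); split => //.
  - by move=> j; exact: cst_continuous.
  - by move=> j z; rewrite ltxx.
  - by move=> z; right; have [j jn Uj] := cU z; exists j.
have [phi [c1 c2 c3]] := IH (ltnW kn).
pose O := [set z | (exists2 j, (j < k)%N & (0 < phi j z)%R) \/
               (exists j, [/\ (k < j)%N, (j <= n)%N & U j z])].
have oO : open O.
  apply: openP' => z [[j jk pj]|[j [kj jn Uj]]].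
    apply: filterS (nbhs_gt0 (c1 j) pj) => w pw; left; by exists j.
  apply: filterS (open_nbhs_nbhs (conj (oU j jn) Uj)) => w Uw; right; by exists j.
have cC : closed (~` O) by exact: open_closedC.
have CU : ~` O `<=` U k.
  move=> z nO; case: (c3 z) => [[j jk pj]|[j [kj jn Uj]]].
    by exfalso; apply: nO; left; exists j.
  case: (ltnP k j) => kj'.
    by exfalso; apply: nO; right; exists j.
  by have -> : k = j by apply/eqP; rewrite eqn_leq kj kj'.
have cA : closed (~` U k) by apply: open_closedC; apply: oU; rewrite -ltnS.
have AB0 : ~` U k `&` ~` O = set0.
  by apply/seteqP; split => // z [nU /CU].
have := (@normal_separatorP Rdefinitions.R Z).1 hN _ _ cA cC AB0.
move=> /(@uniform_separatorP _ Rdefinitions.R) [f [cf _ fA fB]].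
exists (fun j => if j == k then f else phi j); split.
- by move=> j; case: (j == k).
- move=> j z; case: eqP => [->|_]; last exact: c2.
  move=> fz; apply: contrapT => nU.
  have : f z = 0%R by apply: fA; exists z.
  by move=> e; move: fz; rewrite e ltxx.
- move=> z.
  case: (pselect (O z)) => [[[j jk pj]|[j [kj jn Uj]]]|nO].
  + left; exists j; first exact: ltnW.
    by have -> : (j == k) = false by apply/negbTE; rewrite neq_ltn jk.
  + by right; exists j.
  + left; exists k => //; rewrite eqxx.
    have -> : f z = 1%R by apply: fB; exists z.
    exact: ltr01.
Qed.

Lemma exists_max {I : finType} (i0 : I) (F : I -> Rdefinitions.R) :
  exists i, forall j, (F j <= F i)%R.
Proof.
case: (@arg_maxP _ _ I i0 xpredT F isT) => i _ H; exists i => j; exact: H.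
Qed.

Definition vT {Z : Type} n m (phi psi : nat -> Z -> Rdefinitions.R)
  (a : ('I_n.+1 + 'I_m.+1)%type) (z : Z) : Rdefinitions.R :=
  match a with inl i => phi i z | inr j => psi j z end.

Definition Wset {Z : Type} n m (phi psi : nat -> Z -> Rdefinitions.R)
  (S : {set ('I_n.+1 + 'I_m.+1)}) : set Z :=
  [set z | (forall a, a \in S -> (0 < vT phi psi a z)%R) /\
           (forall a b, a \in S -> b \notin S -> (vT phi psi b z < vT phi psi a z)%R)].

Definition goodR n m (k : nat) (S : {set ('I_n.+1 + 'I_m.+1)}) : bool :=
  [&& #|S| == k.+2, [exists i, inl i \in S] & [exists j, inr j \in S]].

Lemma Wset_open {Z : topologicalType} n m (phi psi : nat -> Z -> Rdefinitions.R) (S : {set ('I_n.+1 + 'I_m.+1)}) :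
  (forall j, continuous (phi j)) -> (forall j, continuous (psi j)) ->
  open (Wset phi psi S).
Proof.
move=> cphi cpsi.
have cv : forall a : ('I_n.+1 + 'I_m.+1), continuous (vT phi psi a) by case=> i; [exact: cphi | exact: cpsi].
apply: openP' => z [Wz1 Wz2].
have N1 : \forall w \near z, forall a, a \in S -> (0 < vT phi psi a w)%R.
  apply: (@filter_forall _ _ (fun a => [set w | a \in S -> (0 < vT phi psi a w)%R])) => a.
  case: (boolP (a \in S)) => aS.
    by apply: filterS (nbhs_gt0 (cv a) (Wz1 a aS)) => w /= h _.
  by apply: filterE => w /=.
have N2 : \forall w \near z, forall ab : _ * _, ab.1 \in S -> ab.2 \notin S ->
     (vT phi psi ab.2 w < vT phi psi ab.1 w)%R.
  apply: (@filter_forall _ _ (fun ab : _ * _ => [set w | ab.1 \in S -> ab.2 \notin S ->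
     (vT phi psi ab.2 w < vT phi psi ab.1 w)%R])) => -[a b] /=.
  case: (boolP (a \in S)) => aS; last by apply: filterE => w /=.
  case: (boolP (b \in S)) => bS; first by apply: filterE => w /=; rewrite ?bS.
  have cd : continuous (fun w => vT phi psi a w - vT phi psi b w)%R.
    by move=> w; have := @continuousB _ Rdefinitions.R^o Z _ _ w (cv a w) (cv b w); exact.
  have := Wz2 a b aS bS; rewrite -subr_gt0 => h.
  by apply: filterS (nbhs_gt0 cd h) => w /=; rewrite subr_gt0 => ? _ _.
have N2' : \forall w \near z, forall a b, a \in S -> b \notin S ->
     (vT phi psi b w < vT phi psi a w)%R.
  by apply: filterS N2 => w H a b; exact: (H (a, b)).
by apply: filterS (filterI N1 N2') => w [].
Qed.

Lemma Wset_uniq {Z : Type} n m (phi psi : nat -> Z -> Rdefinitions.R) (S S' : {set ('I_n.+1 + 'I_m.+1)}) z :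
  Wset phi psi S z -> Wset phi psi S' z -> #|S| = #|S'| -> S = S'.
Proof.
move=> [_ W1] [_ W2] cS; apply/eqP; rewrite eqEcard cS leqnn andbT.
apply: contraT => /subsetPn [a aS aS'].
have : ~~ (S' \subset S).
  apply/negP => sub; have /eqP E : S' == S by rewrite eqEcard sub cS leqnn.
  by move: aS'; rewrite E aS.
move=> /subsetPn [b bS' bS].
have h1 := W1 a b aS bS; have h2 := W2 b a bS' aS'.
by move: (lt_trans h1 h2); rewrite ltxx.
Qed.

Lemma Wset_cover {Z : Type} n m (phi psi : nat -> Z -> Rdefinitions.R) z :
  (exists2 i, (i <= n)%N & (0 < phi i z)%R) -> (exists2 j, (j <= m)%N & (0 < psi j z)%R) ->
  exists k, (k <= n + m)%N /\
    exists S : {set ('I_n.+1 + 'I_m.+1)}, goodR k S /\ Wset phi psi S z.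
Proof.
move=> [i il pi] [j jl pj].
have [i0 Hi] := exists_max ord0 (fun i : 'I_n.+1 => phi i z).
have [j0 Hj] := exists_max ord0 (fun j : 'I_m.+1 => psi j z).
have pa : (0 < phi i0 z)%R.
  apply: (lt_le_trans pi); have := Hi (inord i); rewrite /= inordK //.
have pb : (0 < psi j0 z)%R.
  apply: (lt_le_trans pj); have := Hj (inord j); rewrite /= inordK //.
pose M := Num.min (phi i0 z) (psi j0 z).
have M0 : (0 < M)%R by rewrite lt_min pa pb.
pose S : {set ('I_n.+1 + 'I_m.+1)} := [set a | (M <= vT phi psi a z)%R]%SET.
have aS : inl i0 \in S by rewrite inE /= ge_min lexx.
have bS : inr j0 \in S by rewrite inE /= ge_min lexx orbT.
have c2 : (2 <= #|S|)%N.
  have : [set inl i0; inr j0]%SET \subset S.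
    by apply/fintype.subsetP => x; rewrite in_set2 => /orP [] /eqP ->.
  by move/subset_leq_card; rewrite cards2.
have cT : (#|S| <= n.+1 + m.+1)%N.
  by have := max_card (mem S); rewrite card_sum !card_ord.
exists (#|S| - 2)%N; split; first lia.
exists S; split.
  rewrite /goodR; apply/and3P; split.
  - apply/eqP; lia.
  - by apply/existsP; exists i0.
  - by apply/existsP; exists j0.
split.
  by move=> a; rewrite inE => h; apply: lt_le_trans h.
move=> a b; rewrite !inE -ltNge => h1 h2; exact: lt_le_trans h2 h1.
Qed.

Lemma hdist_someP {X Y : topologicalType} (f g : X -> Y) n :
  hdist f g = Some n -> hdist_cover f g n.
Proof.
rewrite /hdist; case: pselect => // h [<-].
by case: ex_minnP => k /asboolP.
Qed.

Lemma hdist_le {X Y : topologicalType} (f g : X -> Y) k :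
  hdist_cover f g k -> exists n, hdist f g = Some n /\ (n <= k)%N.
Proof.
move=> hk; rewrite /hdist; case: pselect => [h|h]; last by exfalso; apply: h; exists k.
eexists; split; first reflexivity.
case: ex_minnP => n _ H; apply: H; exact/asboolP.
Qed.

Lemma choose_homot {X Y : topologicalType} (U : nat -> set X) (f g : X -> Y) n :
  (forall j, (j <= n)%N -> homotopic_on (U j) f g) ->
  exists HH : nat -> X * Rdefinitions.R -> Y, forall j, (j <= n)%N ->
    [/\ {within U j `*` `[0%R, 1%R], continuous HH j},
        (forall x, U j x -> HH j (x, 0%R) = f x) &
        (forall x, U j x -> HH j (x, 1%R) = g x)].
Proof.
move=> hU.
have : forall j, exists H : X * Rdefinitions.R -> Y, (j <= n)%N ->
    [/\ {within U j `*` `[0%R, 1%R], continuous H},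
        (forall x, U j x -> H (x, 0%R) = f x) &
        (forall x, U j x -> H (x, 1%R) = g x)].
  move=> j; case: (leqP j n) => jn.
    by have [H [c [h0 h1]]] := hU j jn; exists H.
  by exists (fun p => f p.1).
by case/choice => HH HHs; exists HH.
Qed.

Lemma prod_cover (X Y X' Y' : topologicalType)
  (f g : X -> Y) (f' g' : X' -> Y')
  (hN : normal_space (X * X')%type) n m :
  hdist_cover f g n -> hdist_cover f' g' m ->
  hdist_cover (prod_map f f') (prod_map g g') (n + m).
Proof.
move=> [U [oU [cU hU]]] [V [oV [cV hV]]].
have [HH HHs] := choose_homot hU.
have [HH' HHs'] := choose_homot hV.
have [phi [cphi phiU phicov]] := @cover_funs _ hN (fun j => U j `*` [set: X']) n
  (fun j jn => @openX1 X X' _ (oU j jn))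
  (fun z => let: ex_intro2 j jn Uj := cU z.1 in ex_intro2 _ _ j jn (conj Uj I)).
have [psi [cpsi psiV psicov]] := @cover_funs _ hN (fun j => [set: X] `*` V j) m
  (fun j jn => @openX2 X X' _ (oV j jn))
  (fun z => let: ex_intro2 j jn Vj := cV z.2 in ex_intro2 _ _ j jn (conj I Vj)).
pose O (k : nat) : set (X * X') :=
  [set p | exists S : {set ('I_n.+1 + 'I_m.+1)}, goodR k S /\ Wset phi psi S p].
pose Rsel (k : nat) (p : X * X') : {set ('I_n.+1 + 'I_m.+1)} :=
  odflt (@finset.set0 _) [pick S | goodR k S && `[< Wset phi psi S p >]].
have RselP : forall k p, O k p -> goodR k (Rsel k p) /\ Wset phi psi (Rsel k p) p.
  move=> k p [S [gS WS]]; rewrite /Rsel; case: pickP => [S' /andP [gS' /asboolP W'] //|].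
  by move/(_ S); rewrite gS (asboolT WS).
pose ci (S : {set ('I_n.+1 + 'I_m.+1)}) : 'I_n.+1 := odflt ord0 [pick i | inl i \in S].
pose cj (S : {set ('I_n.+1 + 'I_m.+1)}) : 'I_m.+1 := odflt ord0 [pick j | inr j \in S].
have goodU : forall k S p, goodR k S -> Wset phi psi S p -> U (ci S) p.1 /\ V (cj S) p.2.
  move=> k S p /and3P [_ /existsP [i iS] /existsP [j jS]] [WS _]; split.
    rewrite /ci; case: pickP => [i' i'S|/(_ i)]; last by rewrite iS.
    by have [] := phiU i' p (WS _ i'S).
  rewrite /cj; case: pickP => [j' j'S|/(_ j)]; last by rewrite jS.
  by have [] := psiV j' p (WS _ j'S).
have ciN : forall S, (ci S <= n)%N by move=> S; rewrite -ltnS; exact: ltn_ord.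
have cjN : forall S, (cj S <= m)%N by move=> S; rewrite -ltnS; exact: ltn_ord.
pose Hk (k : nat) (w : (X * X') * Rdefinitions.R) :=
  let S := Rsel k w.1 in (HH (ci S) (w.1.1, w.2), HH' (cj S) (w.1.2, w.2)).
exists O; split; [|split].
- move=> k _; apply: openP' => p [S [gS WS]].
  apply: filterS (open_nbhs_nbhs (conj (Wset_open S cphi cpsi) WS)) => q Wq.
  by exists S.
- move=> p; have [k [kl [S [gS WS]]]] := Wset_cover (phicov p) (psicov p).
  by exists k => //; exists S.
move=> k kl; exists (Hk k); split; [|split].
- apply: glue_local => -[p t] [Op It].
  have [gR WR] := RselP k p Op.
  exists (Wset phi psi (Rsel k p) `*` [set: Rdefinitions.R]),
    (fun w : (X * X') * Rdefinitions.R => (HH (ci (Rsel k p)) (w.1.1, w.2),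
                HH' (cj (Rsel k p)) (w.1.2, w.2))),
    ((U (ci (Rsel k p)) `*` V (cj (Rsel k p))) `*` `[0%R, 1%R]).
  have [Up Vp] := goodU _ _ _ gR WR.
  split.
  + exists (Wset phi psi (Rsel k p), [set: Rdefinitions.R]) => //=; split.
      exact: (open_nbhs_nbhs (conj (Wset_open _ cphi cpsi) WR)).
    exact: filterT.
  + move=> [q s] [/= Wq _] [/= Oq Is].
    have [gq Wq'] := RselP k q Oq.
    have E : Rsel k q = Rsel k p.
      apply: (Wset_uniq Wq' Wq).
      by move: gq gR => /and3P [/eqP -> _ _] /and3P [/eqP -> _ _].
    have [Uq Vq] := goodU _ _ _ gR Wq.
    by split; [split | rewrite /Hk /= E].
  + by split.
  + have [c1 _ _] := HHs _ (ciN (Rsel k p)).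
    have [c2 _ _] := HHs' _ (cjN (Rsel k p)).
    have := prod_homot c1 c2; move/subspace_continuousP; apply.
    by split.
- move=> p Op; rewrite /Hk /=; have [gR WR] := RselP k p Op.
  have [Up Vp] := goodU _ _ _ gR WR.
  have [_ h0 _] := HHs _ (ciN (Rsel k p)).
  have [_ h0' _] := HHs' _ (cjN (Rsel k p)).
  by rewrite /prod_map h0 // h0'.
- move=> p Op; rewrite /Hk /=; have [gR WR] := RselP k p Op.
  have [Up Vp] := goodU _ _ _ gR WR.
  have [_ _ h1] := HHs _ (ciN (Rsel k p)).
  have [_ _ h1'] := HHs' _ (cjN (Rsel k p)).
  by rewrite /prod_map h1 // h1'.
Qed.

Theorem theorem3p20 (X Y X' Y' : topologicalType)
  (f g : X -> Y) (f' g' : X' -> Y')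
  (cf : continuous f) (cg : continuous g)
  (cf' : continuous f') (cg' : continuous g')
  (hN : normal_space (X * X')%type) :
  ole (hdist (prod_map f f') (prod_map g g')) (oadd (hdist f g) (hdist f' g')).
Proof.
case E1: (hdist f g) => [n|]; last by case: (hdist _ _).
case E2: (hdist f' g') => [m|]; last by case: (hdist _ _).
have [d [-> dl]] := hdist_le (prod_cover hN (hdist_someP E1) (hdist_someP E2)).
exact: dl.
Qed.
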